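(* Let $\mathcal{X}_q$ be constructed from $(\Pi_+,\Pi_-,\Lambda)$ as in the context. Let $r_1<r_2<\dots$ be the record indices of $\Pi_+$. Define $\rho_1=\Pi_-^{-1}(1)$ and $\rho_{i+1}=\Pi_-^{-1}\big(\min\{\Pi_-(k):k>\rho_i\}\big)$ for $i\ge1$. Let $m\in\mathbb{N}$ be minimal such that $k_{1-\rho_m}<\ell_1$. Then the standard record representation of $\mathcal{X}_q$ is $$(\dots,k_{1-\rho_{m+2}},k_{1-\rho_{m+1}},\underline{k_{1-\rho_m}},\ell_{r_1},\ell_{r_2},\dots),$$ where the underlined entry has index $0$ (i.e. the record index with index $j\le0$ is $k_{1-\rho_{m-j}}$, and the one with index $j\ge1$ is $\ell_{r_j}$).
   Context: Fix $q\in[0,1)$. A Mallows permutation on $\mathbb{N}$ with parameter $q$ is $(I_1,I_2,\dots)$ where $(B_{i,j})_{i,j\ge1}$ are independent Bernoulli$(1-q)$ and $I_i=\min\{j\notin\{I_1,\dots,I_{i-1}\}:B_{i,j}=1\}$. Let $\Pi_+,\Pi_-$ be independent Mallows permutations on $\mathbb{N}$; $(M_i)_{i\ge1}$ independent with $\mathbb{P}(M_i=m)=q^{im}(1-q^i)$; $\Lambda=(\Lambda_1\ge\Lambda_2\ge\dots\ge0)$ with $|\{j:\Lambda_j=i\}|=M_i$ for $i\ge1$; $\ell_i=i-\Lambda_i$ for $i\ge1$; $k_0>k_{-1}>k_{-2}>\dots$ enumerate $\mathbb{Z}\setminus\{\ell_i:i\ge1\}$. Define the permutation $\mathcal{X}_q$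 of $\mathbb{Z}$ by $\mathcal{X}_q(\ell_i)=\Pi_+(i)$ and $\mathcal{X}_q(k_i)=1-\Pi_-(1-i)$ for $i\le0$ (the two-sided infinite Mallows permutation; it is a.s. admissible). For a permutation $\sigma$ of $\mathbb{N}$ or $\mathbb{Z}$, a record index is $r$ with $\sigma(r)>\sigma(k)$ for all $k<r$ in the domain. For $\sigma$ of $\mathbb{Z}$ with two-sided infinitely many record indices, the standard record representation is their increasing enumeration $(r_k)_{k\in\mathbb{Z}}$ indexed so that $\sigma(r_0)\le0<\sigma(r_1)$. *)

(* Defs.v *)
(* nat for N-indexed objects (N = {1,2,...}), Z for Z-indexed ones. *)
From Stdlib Require Import ZArith Lia.
Open Scope Z_scope.

(* A permutation of N = {1,2,3,...}, given as a function nat -> nat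
   (its value at 0 is irrelevant). *)
Definition perm_N (P : nat -> nat) : Prop :=
  (forall n, (1 <= n)%nat -> (1 <= P n)%nat) /\
  (forall a b, (1 <= a)%nat -> (1 <= b)%nat -> P a = P b -> a = b) /\
  (forall v, (1 <= v)%nat -> exists n, (1 <= n)%nat /\ P n = v).

(* Lambda = (Lambda_1 >= Lambda_2 >= ... >= 0) with finitely many nonzero
   parts (a.s. the case since sum_i q^i < oo), i.e. a partition such that
   |{j : Lambda_j = i}| =: M_i is finitely supported. *)
Definition is_partition (L : nat -> nat) : Prop :=
  (forall j, (1 <= j)%nat -> (L (S j) <= L j)%nat) /\
  (exists N, forall j, (N <= j)%nat -> L j = 0%nat).

(* the multiplicity M_i = |{j >= 1 : Lambda_j = i}| is encoded through L *)

Definition ell (L : nat -> nat) (i : nat) : Z := Z.of_nat i - Z.of_nat (L i).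

Definition enum_complement (L : nat -> nat) (k : Z -> Z) : Prop :=
  (forall i j, i < j <= 0 -> k i < k j) /\
  (forall i, i <= 0 -> forall j, (1 <= j)%nat -> k i <> ell L j) /\
  (forall z, (forall j, (1 <= j)%nat -> z <> ell L j) ->
             exists i, i <= 0 /\ k i = z).

Definition two_sided_from (Pp Pm L : nat -> nat) (k X : Z -> Z) : Prop :=
  (forall i, (1 <= i)%nat -> X (ell L i) = Z.of_nat (Pp i)) /\
  (forall i, i <= 0 -> X (k i) = 1 - Z.of_nat (Pm (Z.to_nat (1 - i)))).

Definition is_record_N (s : nat -> nat) (r : nat) : Prop :=
  (1 <= r)%nat /\ forall j, (1 <= j < r)%nat -> (s j < s r)%nat.

Definition record_enum_N (s : nat -> nat) (r : nat -> nat) : Prop :=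
  (forall i j, (1 <= i < j)%nat -> (r i < r j)%nat) /\
  (forall i, (1 <= i)%nat -> is_record_N s (r i)) /\
  (forall p, is_record_N s p -> exists i, (1 <= i)%nat /\ r i = p).

Definition is_record_Z (X : Z -> Z) (p : Z) : Prop :=
  forall j, j < p -> X j < X p.

Definition std_record_rep (X : Z -> Z) (R : Z -> Z) : Prop :=
  (forall i j, i < j -> R i < R j) /\
  (forall i, is_record_Z X (R i)) /\
  (forall p, is_record_Z X p -> exists i, R i = p) /\
  X (R 0) <= 0 < X (R 1).

Definition rho_seq (Pm : nat -> nat) (rho : nat -> nat) : Prop :=
  (1 <= rho 1%nat)%nat /\ Pm (rho 1%nat) = 1%nat /\
  (forall i, (1 <= i)%nat ->
     (rho i < rho (S i))%nat /\
     forall j, (rho i < j)%nat -> (Pm (rho (S i)) <= Pm j)%nat).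

Definition minimal_m (L : nat -> nat) (k : Z -> Z) (rho : nat -> nat) (m : nat)
  : Prop :=
  (1 <= m)%nat /\ k (1 - Z.of_nat (rho m)) < ell L 1%nat /\
  (forall m', (1 <= m' < m)%nat -> ell L 1%nat <= k (1 - Z.of_nat (rho m'))).

(* Main.v *)
Require Import Defs.
From Stdlib Require Import ZArith Lia Classical.
Open Scope Z_scope.

Lemma ell_lt L : is_partition L -> forall a b, (1<=a)%nat -> (a<b)%nat -> ell L a < ell L b.
Proof.
  intros [HL _] a b Ha Hab. induction b; [lia|].
  destruct (Nat.eq_dec a b) as [->|Hne].
  - unfold ell. specialize (HL b Ha). lia.
  - assert (Hb : (1 <= b)%nat) by lia. specialize (HL b Hb).
    assert (ell L a < ell L b) by (apply IHb; lia). unfold ell in *. lia.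
Qed.

Lemma ell_le L : is_partition L -> forall a b, (1<=a)%nat -> (a<=b)%nat -> ell L a <= ell L b.
Proof.
  intros HL a b Ha Hab. destruct (Nat.eq_dec a b) as [->|]; [lia|].
  assert (ell L a < ell L b) by (apply ell_lt; auto; lia). lia.
Qed.

Lemma ell_rev L : is_partition L -> forall a b, (1<=a)%nat -> (1<=b)%nat -> ell L a < ell L b -> (a < b)%nat.
Proof.
  intros HL a b Ha Hb H. destruct (Nat.lt_ge_cases a b); auto.
  assert (ell L b <= ell L a) by (apply ell_le; auto). lia.
Qed.

Lemma k_rev L k : enum_complement L k -> forall i j, i <= 0 -> j <= 0 -> k i < k j -> i < j.
Proof.
  intros [Hk _] i j Hi Hj H. destruct (Z_lt_ge_dec i j); auto.
  destruct (Z.eq_dec i j) as [->|]; [lia|].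
  assert (k j < k i) by (apply Hk; lia). lia.
Qed.

Lemma decomp L k : enum_complement L k -> forall z,
  (exists j, (1 <= j)%nat /\ z = ell L j) \/ (exists i, i <= 0 /\ k i = z).
Proof.
  intros [_ [_ H3]] z.
  destruct (classic (exists j, (1 <= j)%nat /\ z = ell L j)) as [H|H]; [left; auto|right].
  apply H3. intros j Hj E. apply H. eauto.
Qed.

Lemma rho_lt Pm rho : rho_seq Pm rho -> forall a b, (1 <= a)%nat -> (a < b)%nat -> (rho a < rho b)%nat.
Proof.
  intros [_ [_ H]] a b Ha Hab. induction b; [lia|].
  destruct (Nat.eq_dec a b) as [->|].
  - apply H; auto.
  - assert (rho a < rho b)%nat by (apply IHb; lia).
    assert (rho b < rho (S b))%nat by (apply H; lia). lia.
Qed.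

Lemma rho_ge Pm rho : rho_seq Pm rho -> forall t, (1 <= t)%nat -> (t <= rho t)%nat.
Proof.
  intros Hr t Ht. induction t; [lia|].
  destruct (Nat.eq_dec t 0) as [->|].
  - destruct Hr; lia.
  - assert (rho t < rho (S t))%nat by (apply (rho_lt Pm rho Hr); lia). lia.
Qed.

Lemma rho_min Pm rho : perm_N Pm -> rho_seq Pm rho -> forall t, (1 <= t)%nat ->
  forall j, (rho t < j)%nat -> (Pm (rho t) < Pm j)%nat.
Proof.
  intros [P1 [P2 _]] Hr t Ht j Hj.
  pose proof (rho_ge Pm rho Hr t Ht) as Hg.
  destruct t as [|t]; [lia|].
  destruct (Nat.eq_dec t 0) as [->|Ht0].
  - destruct Hr as [_ [E _]]. rewrite E.
    assert (1 <= Pm j)%nat by (apply P1; lia).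
    destruct (Nat.eq_dec (Pm j) 1); [|lia].
    assert (j = rho 1%nat) by (apply P2; lia). lia.
  - destruct Hr as [_ [_ H]]. destruct (H t ltac:(lia)) as [H1 H2].
    assert (Pm (rho (S t)) <= Pm j)%nat by (apply H2; lia).
    destruct (Nat.eq_dec (Pm (rho (S t))) (Pm j)); [|lia].
    assert (rho (S t) = j) by (apply P2; auto; lia). lia.
Qed.

Lemma rtl_rho Pm rho : perm_N Pm -> rho_seq Pm rho -> forall n, (1 <= n)%nat ->
  (forall n', (n < n')%nat -> (Pm n < Pm n')%nat) -> exists t, (1 <= t)%nat /\ rho t = n.
Proof.
  intros HP Hr n Hn Hmin.
  destruct HP as [P1 [P2 P3]].
  assert (G : forall s, (1 <= s)%nat -> (exists t, (1 <= t)%nat /\ rho t = n) \/ (rho s <= n)%nat).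
  { induction s; intros Hs; [lia|].
    destruct (Nat.eq_dec s 0) as [->|Hs0].
    - right. destruct (Nat.le_gt_cases (rho 1%nat) n); auto.
      specialize (Hmin _ H). destruct Hr as [_ [E _]]. specialize (P1 n Hn). lia.
    - destruct (IHs ltac:(lia)) as [H|H]; [left; auto|].
      destruct (Nat.eq_dec (rho s) n) as [E|].
      + left. exists s. split; auto; lia.
      + right. destruct Hr as [_ [_ Hr]]. destruct (Hr s ltac:(lia)) as [_ H2].
        assert (Pm (rho (S s)) <= Pm n)%nat by (apply H2; lia).
        destruct (Nat.le_gt_cases (rho (S s)) n); auto.
        specialize (Hmin _ H1). lia. }
  destruct (G (S n) ltac:(lia)) as [H|H]; auto.
  pose proof (rho_ge Pm rho Hr (S n) ltac:(lia)). lia.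
Qed.

Theorem proposition3p1 (Pp Pm L : nat -> nat) (k X : Z -> Z)
  (r rho : nat -> nat) (m : nat)
  (HPp : perm_N Pp) (HPm : perm_N Pm) (HL : is_partition L)
  (Hk : enum_complement L k) (HX : two_sided_from Pp Pm L k X)
  (Hr : record_enum_N Pp r) (Hrho : rho_seq Pm rho)
  (Hm : minimal_m L k rho m) :
  std_record_rep X
    (fun j => if j <=? 0
              then k (1 - Z.of_nat (rho (Z.to_nat (Z.of_nat m - j))))
              else ell L (r (Z.to_nat j))).
Proof.
  pose proof (decomp L k Hk) as Dec.
  pose proof (k_rev L k Hk) as Krev.
  pose proof (rho_ge Pm rho Hrho) as Rge.
  pose proof (rho_lt Pm rho Hrho) as Rlt.
  pose proof (rho_min Pm rho HPm Hrho) as Rmin.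
  pose proof (rtl_rho Pm rho HPm Hrho) as Rtl.
  pose proof (ell_lt L HL) as Elt.
  pose proof (ell_le L HL) as Ele.
  pose proof (ell_rev L HL) as Erev.
  destruct HX as [HXl HXk].
  destruct Hm as [Hm1 [Hm2 Hm3]].
  destruct Hr as [Hr1 [Hr2 Hr3]].
  destruct HPp as [Pp1 _]. destruct HPm as [Pm1 _].
  pose proof Hk as [Kinc [Kne _]].
  assert (Rpos : forall x, (1 <= x)%nat -> (1 <= r x)%nat) by (intros x Hx; apply (Hr2 x Hx)).
  assert (Kbelow : forall n, (m <= n)%nat -> k (1 - Z.of_nat (rho n)) < ell L 1).
  { intros n Hn. destruct (Nat.eq_dec n m) as [->|]; auto.
    assert (rho m < rho n)%nat by (apply Rlt; lia). pose proof (Rge m Hm1).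
    assert (k (1 - Z.of_nat (rho n)) < k (1 - Z.of_nat (rho m))) by (apply Kinc; lia). lia. }
  assert (Xk : forall i, i <= 0 -> X (k i) <= 0).
  { intros i Hi. rewrite HXk by auto. specialize (Pm1 (Z.to_nat (1 - i)) ltac:(lia)). lia. }
  assert (Xl : forall i, (1 <= i)%nat -> 1 <= X (ell L i)).
  { intros i Hi. rewrite HXl by auto. specialize (Pp1 i Hi). lia. }
  split; [|split; [|split]].
  - intros i j Hij.
    destruct (Z.leb_spec i 0); destruct (Z.leb_spec j 0); try lia.
    + assert (rho (Z.to_nat (Z.of_nat m - j)) < rho (Z.to_nat (Z.of_nat m - i)))%nat
        by (apply Rlt; lia).
      pose proof (Rge (Z.to_nat (Z.of_nat m - j)) ltac:(lia)). apply Kinc. lia.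
    + assert (k (1 - Z.of_nat (rho (Z.to_nat (Z.of_nat m - i)))) < ell L 1) by (apply Kbelow; lia).
      assert (ell L 1 <= ell L (r (Z.to_nat j))) by (apply Ele; auto; apply Rpos; lia). lia.
    + apply Elt; [apply Rpos; lia|]. apply Hr1. lia.
  - intros i. destruct (Z.leb_spec i 0).
    + set (n := Z.to_nat (Z.of_nat m - i)).
      assert (Hn : (m <= n)%nat) by lia.
      assert (Hb := Kbelow n Hn).
      pose proof (Rge n ltac:(lia)).
      intros z Hz. destruct (Dec z) as [[j [Hj ->]]|[i' [Hi' <-]]].
      * assert (ell L 1 <= ell L j) by (apply Ele; lia). lia.
      * assert (i' < 1 - Z.of_nat (rho n)) by (apply Krev; lia).
        rewrite !HXk by lia.
        replace (Z.to_nat (1 - (1 - Z.of_nat (rho n)))) with (rho n) by lia.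
        assert (Pm (rho n) < Pm (Z.to_nat (1 - i')))%nat by (apply Rmin; lia). lia.
    + set (x := Z.to_nat i). assert (Hx : (1 <= x)%nat) by lia.
      pose proof (Rpos x Hx).
      intros z Hz. destruct (Dec z) as [[j [Hj ->]]|[i' [Hi' <-]]].
      * assert (j < r x)%nat by (apply Erev; auto).
        rewrite !HXl by auto. destruct (Hr2 x Hx) as [_ Hrec].
        specialize (Hrec j ltac:(lia)). lia.
      * specialize (Xk i' Hi'). specialize (Xl (r x) ltac:(auto)). lia.
  - intros p Hp. destruct (Dec p) as [[i [Hi ->]]|[i [Hi <-]]].
    + assert (HrN : is_record_N Pp i).
      { split; auto. intros j Hj.
        assert (ell L j < ell L i) by (apply Elt; lia).
        specialize (Hp _ H). rewrite !HXl in Hp by lia. lia. }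
      destruct (Hr3 i HrN) as [i0 [Hi0 E]].
      exists (Z.of_nat i0). destruct (Z.leb_spec (Z.of_nat i0) 0); [lia|].
      rewrite Nat2Z.id. congruence.
    + assert (Hlt : k i < ell L 1).
      { destruct (Z_lt_ge_dec (k i) (ell L 1)); auto.
        assert (k i <> ell L 1) by (apply Kne; auto; lia).
        assert (ell L 1 < k i) by lia.
        specialize (Hp _ H0). specialize (Xk i Hi). specialize (Xl 1%nat ltac:(lia)). lia. }
      set (n := Z.to_nat (1 - i)).
      assert (Hmin : forall n', (n < n')%nat -> (Pm n < Pm n')%nat).
      { intros n' Hn'.
        assert (k (1 - Z.of_nat n') < k i) by (apply Kinc; lia).
        specialize (Hp _ H). rewrite !HXk in Hp by lia.
        replace (Z.to_nat (1 - (1 - Z.of_nat n'))) with n' in Hp by lia.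
        fold n in Hp. lia. }
      destruct (Rtl n ltac:(lia) Hmin) as [t [Ht Et]].
      assert (Htm : (m <= t)%nat).
      { destruct (Nat.le_gt_cases m t); auto.
        specialize (Hm3 t ltac:(lia)). rewrite Et in Hm3.
        replace (1 - Z.of_nat n) with i in Hm3 by lia. lia. }
      exists (Z.of_nat m - Z.of_nat t).
      destruct (Z.leb_spec (Z.of_nat m - Z.of_nat t) 0); [|lia].
      replace (Z.to_nat (Z.of_nat m - (Z.of_nat m - Z.of_nat t))) with t by lia.
      rewrite Et. f_equal. lia.
  - cbn [Z.leb Z.compare]. split.
    + replace (Z.of_nat m - 0) with (Z.of_nat m) by lia. rewrite Nat2Z.id. apply Xk. pose proof (Rge m Hm1). lia.
    + assert (1 <= X (ell L (r 1%nat))) by (apply Xl; apply Rpos; lia). idtac.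
      change (Z.to_nat 1) with 1%nat. lia.
Qed.
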